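(* Let $V$ be a vector configuration of rank $r$ containing no copy of the zero vector, with $n=r+d+1$ elements and dual degree $\deg^*(V)=\delta$. Then \[\mathrm{DD}(V)=r-(d+1-2\delta),\qquad \operatorname{rank}(V)+\deg^*(V)=\mathrm{DD}(V)+\operatorname{codeg}^*(V),\qquad |V|=\mathrm{DD}(V)+2\operatorname{codeg}^*(V).\] Moreover, every oriented linear hyperplane $H$ with $|\overline{H}^-\cap V|=\operatorname{codeg}^*(V)$ satisfies $|H^+\cap V|=\mathrm{DD}(V)+\operatorname{codeg}^*(V)$.
   Context: A vector configuration is a finite family (repetitions allowed) $V$ of vectors in $\mathbb{R}^r$; $\operatorname{rank}(V)=\dim\operatorname{lin}(V)$, and cardinalities count multiplicities. For a nonzero linear functional $f$, the oriented linear hyperplane $H=\{f=0\}$ has $H^+=\{f>0\}$, $H^-=\{f<0\}$, $\overline{H}^-=\{f\le0\}$. Dual codegree: $\operatorname{codeg}^*(V)=\min_H|\overline{H}^-\cap V|$; dual degree: $\deg^*(V)=\max_H|H^+\cap V|-\operatorname{rank}(V)$, over oriented linear hyperplanes $H$. Covector discrepancy: $\mathrm{DD}(V)=\max_f\big|\,|\{v: f(v)>0\}|-|\{v:f(v)<0\}|\,\big|$ over all linear functionals $f$. *)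

(* Defs.v *)
From HB Require Import structures.
From mathcomp Require Import all_boot all_order all_algebra.
From mathcomp Require Import boolp reals.
Set Implicit Arguments. Unset Strict Implicit. Unset Printing Implicit Defensive.
Import Order.TTheory GRing.Theory Num.Theory.
Local Open Scope ring_scope.

(* A vector configuration of n vectors in R^m is the family of rows of
   V : 'M[R]_(n, m) (repetitions allowed).  A linear functional f on R^m is
   given by a column vector a : 'cV_m, f(v) = v *m a. *)
Section VC.
Variables (R : realType) (n m : nat).
Implicit Types (V : 'M[R]_(n, m)) (a : 'cV[R]_m).

Definition fval V a (i : 'I_n) : R := (row i V *m a) 0 0.

Definition npos V a : nat := #|[set i | 0 < fval V a i]|.
Definition nneg V a : nat := #|[set i | fval V a i < 0]|.
Definition nnonpos V a : nat := #|[set i | fval V a i <= 0]|.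

Definition codeg V : nat :=
  \big[minn/n]_(k < n.+1 | `[< exists2 a, a != 0 & nnonpos V a = k >]) k.

Definition deg V : int :=
  (\max_(k < n.+1 | `[< exists2 a, a != 0 & npos V a = k >]) k)%:Z
  - (\rank V)%:Z.

Definition DD V : nat :=
  \max_(k < n.+1 | `[< exists a, `|(npos V a)%:Z - (nneg V a)%:Z|%N = k >]) k.
End VC.

(* Main.v *)
Require Import Defs.
From HB Require Import structures.
From mathcomp Require Import all_boot all_order all_algebra.
From mathcomp Require Import boolp reals zify lra.
Import Order.TTheory GRing.Theory Num.Theory.
Local Open Scope ring_scope.

Lemma cardS_sum (T : finType) (P : pred T) :
  #|[set i | P i]| = (\sum_i (P i : nat))%N.
Proof.
rewrite -sum1_card big_mkcond /=; apply: eq_bigr => i _.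
by rewrite inE; case: (P i).
Qed.

Lemma fvalD (R : realType) n m (V : 'M[R]_(n, m)) a b e i :
  fval V (a + e *: b) i = fval V a i + e * fval V b i.
Proof. by rewrite /fval mulmxDr -scalemxAr !mxE. Qed.

Lemma fvalN (R : realType) n m (V : 'M[R]_(n, m)) a i :
  fval V (- a) i = - fval V a i.
Proof. by rewrite /fval mulmxN !mxE. Qed.

Lemma fval_delta (R : realType) n m (V : 'M[R]_(n, m)) j i :
  fval V (delta_mx j 0) i = V i j.
Proof. by rewrite /fval -colE !mxE. Qed.

Lemma npos_nnonpos (R : realType) n m (V : 'M[R]_(n, m)) a :
  (npos V a + nnonpos V a)%N = n.
Proof.
rewrite /npos /nnonpos !cardS_sum -big_split /=.
rewrite -[n in RHS]card_ord -sum1_card; apply: eq_bigr => i _.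
by case: ltrP.
Qed.

Lemma small_eps (R : realType) (I : finType) (Q : I -> R -> Prop) :
  (forall i, exists2 e, 0 < e & forall e', 0 < e' -> e' <= e -> Q i e') ->
  exists2 e, 0 < e & forall i, Q i e.
Proof.
move=> H.
have: forall s : seq I, exists2 e, 0 < e &
   forall i, i \in s -> forall e', 0 < e' -> e' <= e -> Q i e'.
  elim=> [|i s [e1 e1p IH]]; first by exists 1.
  have [e2 e2p H2] := H i.
  exists (Order.min e1 e2); first by rewrite lt_min e1p e2p.
  move=> k; rewrite inE => /orP [/eqP -> | ks] e' e'p; rewrite le_min => /andP [h1 h2].
    exact: H2.
  exact: IH.
move/(_ (enum I)) => [e ep He]; exists e => // i.
by apply: (He i) => //; rewrite mem_enum.
Qed.


Lemma eps_pt (R : realType) (x y : R) :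
  exists2 e, 0 < e & forall e', 0 < e' -> e' <= e ->
    (0 < x -> 0 < x + e' * y) /\ (x < 0 -> x + e' * y < 0).
Proof.
have hy : 0 <= `|y| by [].
have hy1 : 0 < `|y| + 1 by lra.
have ly : y <= `|y| by apply: ler_norm.
have ly2 : - y <= `|y| by rewrite -normrN; apply: ler_norm.
case: (x =P 0) => [->|xn0].
  by exists 1 => // e' _ _; split; lra.
have ax : 0 < `|x| by rewrite normr_gt0; apply/eqP.
exists (`|x| / (`|y| + 1)); first by rewrite divr_gt0.
move=> e' e'p e'le.
have H : e' * (`|y| + 1) <= `|x|.
  by rewrite -(ler_pM2r hy1) in e'le; rewrite divfK ?gt_eqF in e'le.
have H1 : e' * y <= e' * `|y| by rewrite ler_pM2l.
have H2 : - (e' * y) <= e' * `|y| by rewrite -mulrN ler_pM2l.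
split=> hx.
  by rewrite (gtr0_norm hx) mulrDr mulr1 in H; lra.
by rewrite (ltr0_norm hx) mulrDr mulr1 in H; lra.
Qed.

Lemma step (R : realType) n m (V : 'M[R]_(n, m)) a b (i0 : 'I_n) :
  fval V a i0 = 0 -> fval V b i0 != 0 ->
  (#|[set i | (fval V a i == 0)%R && (fval V b i < 0)%R]| <=
   #|[set i | (fval V a i == 0)%R && (0 < fval V b i)%R]|)%N ->
  exists e : R,
    ((npos V a)%:Z - (nneg V a)%:Z <=
       (npos V (a + e *: b))%:Z - (nneg V (a + e *: b))%:Z)%R /\
    (#|[set i | fval V (a + e *: b) i == 0%R]| < #|[set i | fval V a i == 0%R]|)%N.
Proof.
move=> hx0 hy0 hcnt.
set x := fval V a; set y := fval V b.
have [e ep He] := small_eps R _ (fun (i : 'I_n) (e : R) => (0 < x i -> 0 < x i + e * y i) /\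
                                        (x i < 0 -> x i + e * y i < 0))
                    (fun i => eps_pt R (x i) (y i)).
exists e.
have hg : forall i, fval V (a + e *: b) i = x i + e * y i by move=> i; rewrite fvalD.
have Ppos : forall i, (0 < x i + e * y i) = (0 < x i) || ((x i == 0) && (0 < y i)).
  move=> i; have [h1 h2] := He i.
  case: (ltgtP (x i) 0) => h.
  - by apply/negbTE; rewrite -leNgt; apply/ltW/h2.
  - by rewrite h1.
  - by rewrite h add0r ?eqxx /= ?ltxx pmulr_rgt0.
have Pneg : forall i, (x i + e * y i < 0) = (x i < 0) || ((x i == 0) && (y i < 0)).
  move=> i; have [h1 h2] := He i.
  case: (ltgtP (x i) 0) => h.
  - by rewrite h2.
  - by apply/negbTE; rewrite -leNgt; apply/ltW/h1.
  - by rewrite h add0r ?eqxx /= ?ltxx pmulr_rlt0.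
have E1 : npos V (a + e *: b) =
    (npos V a + #|[set i | (x i == 0)%R && (0 < y i)%R]|)%N.
  rewrite /npos !cardS_sum -big_split; apply: eq_bigr => i _ /=.
  by rewrite hg Ppos; case: (ltgtP (x i) 0).
have E2 : nneg V (a + e *: b) =
    (nneg V a + #|[set i | (x i == 0)%R && (y i < 0)%R]|)%N.
  rewrite /nneg !cardS_sum -big_split; apply: eq_bigr => i _ /=.
  by rewrite hg Pneg; case: (ltgtP (x i) 0).
split.
  rewrite E1 E2; move: hcnt; rewrite -/x -/y; lia.
apply: proper_card; apply/properP; split.
  apply/subsetP => i; rewrite !inE hg => /eqP H.
  case: (ltgtP (x i) 0) => h //.
    by have := (He i).2 h; rewrite H ltxx.
  by have := (He i).1 h; rewrite H ltxx.
exists i0; first by rewrite inE; apply/eqP.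
rewrite inE hg; have -> : x i0 = 0 by []. by rewrite add0r mulf_eq0 negb_or gt_eqF.
Qed.


Lemma improve (R : realType) n m (V : 'M[R]_(n, m)) :
  (forall i, row i V != 0) -> (0 < n)%N -> forall a,
  exists2 g, g != 0 &
    ((npos V a)%:Z - (nneg V a)%:Z <= (npos V g)%:Z - (nnonpos V g)%:Z)%R.
Proof.
move=> hrow n0.
have base : forall a, (forall i, fval V a i != 0) -> exists2 g, g != 0 &
    ((npos V a)%:Z - (nneg V a)%:Z <= (npos V g)%:Z - (nnonpos V g)%:Z)%R.
  move=> a ha; exists a.
    apply/eqP => a0; have := ha (Ordinal n0).
    by rewrite a0 /fval mulmx0 mxE eqxx.
  suff -> : nnonpos V a = nneg V a by [].
  rewrite /nnonpos /nneg; apply: eq_card => i; rewrite !inE le_eqVlt.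
  by rewrite (negbTE (ha i)).
suff H : forall k a, (#|[set i | fval V a i == 0%R]| <= k)%N -> exists2 g, g != 0 &
    ((npos V a)%:Z - (nneg V a)%:Z <= (npos V g)%:Z - (nnonpos V g)%:Z)%R.
  by move=> a; apply: (H _ a (leqnn _)).
elim=> [|k IH] a hk.
  apply: base => i; apply/negP => /eqP hi.
  by move: hk; rewrite leqn0 cards_eq0 => /eqP/setP/(_ i); rewrite !inE hi eqxx.
case: (pickP (fun i => fval V a i == 0)) => [i0 /eqP hi0 | hnone]; last first.
  by apply: base => i; rewrite hnone.
case: (pickP (fun j => V i0 j != 0)) => [j hj | hnj]; last first.
  by have := hrow i0; rewrite (_ : row i0 V = 0) ?eqxx //; apply/rowP => j;
     rewrite !mxE; move/negbFE/eqP: (hnj j).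
set h : 'cV[R]_m := delta_mx j 0.
have fh : forall i, fval V h i = V i j by move=> i; rewrite fval_delta.
have [b [hb0 hbc]] : exists b, fval V b i0 != 0 /\
   (#|[set i | (fval V a i == 0)%R && (fval V b i < 0)%R]| <=
   #|[set i | (fval V a i == 0)%R && (0 < fval V b i)%R]|)%N.
  case: (leqP #|[set i | (fval V a i == 0)%R && (fval V h i < 0)%R]|
              #|[set i | (fval V a i == 0)%R && (0 < fval V h i)%R]|) => hc.
    by exists h; rewrite fh.
  exists (- h); rewrite fvalN oppr_eq0 fh hj; split => //.
  have e1 : #|[set i | (fval V a i == 0)%R && (fval V (- h) i < 0)%R]| =
            #|[set i | (fval V a i == 0)%R && (0 < fval V h i)%R]|.
    by apply: eq_card => i; rewrite !inE fvalN oppr_lt0.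
  have e2 : #|[set i | (fval V a i == 0)%R && (0 < fval V (- h) i)%R]| =
            #|[set i | (fval V a i == 0)%R && (fval V h i < 0)%R]|.
    by apply: eq_card => i; rewrite !inE fvalN oppr_gt0.
  by rewrite e1 e2; apply: ltnW.
have [e [he1 he2]] := @step R _ _ V a b i0 hi0 hb0 hbc.
have hk2 : (#|[set i | fval V (a + e *: b) i == 0%R]| <= k)%N.
  by rewrite -ltnS; apply: leq_trans hk.
have [g g0 hg] := IH (a + e *: b) hk2.
by exists g => //; apply: le_trans hg.
Qed.


Lemma card_le_n n (A : {set 'I_n}) : (#|A| < n.+1)%N.
Proof. by rewrite ltnS; apply: leq_trans (max_card _) _; rewrite card_ord. Qed.

Lemma bigmin_le (I : finType) (Pd : pred I) (F : I -> nat) x0 i :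
  Pd i -> (\big[minn/x0]_(j | Pd j) F j <= F i)%N.
Proof.
move=> Pi; move: (mem_index_enum i); elim: (index_enum I) => // j s IH.
rewrite inE big_cons => /orP [/eqP <- | hs].
  by rewrite Pi geq_minl.
case: (Pd j); last exact: IH.
by rewrite geq_min IH ?orbT.
Qed.

Theorem mainTheorem7 (R : realType) (n m r : nat) (V : 'M[R]_(n, m))
    (d delta : int) :
  \rank V = r ->
  (forall i : 'I_n, row i V != 0) ->
  (n%:Z = r%:Z + d + 1) ->
  deg V = delta ->
  [/\ (DD V)%:Z = r%:Z - (d + 1 - 2 * delta),
      r%:Z + deg V = (DD V)%:Z + (codeg V)%:Z,
      n = (DD V + 2 * codeg V)%N
    & forall a : 'cV[R]_m, a != 0 -> nnonpos V a = codeg V ->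
        npos V a = (DD V + codeg V)%N].
Proof.
move=> hr hrow hn hdeg.
set P := \max_(k < n.+1 | `[< exists2 a, a != 0 & npos V a = k >]) k.
have hdegP : deg V = P%:Z - r%:Z by rewrite /deg hr.
have hcomp : forall a, (npos V a + nnonpos V a)%N = n by move=> a; apply: npos_nnonpos.
have Pn : (P <= n)%N.
  by apply/bigmax_leqP => k _; rewrite -ltnS.
have Dn : (DD V <= n)%N.
  by apply/bigmax_leqP => k _; rewrite -ltnS.
have Cn : (codeg V <= n)%N.
  rewrite /codeg; apply: (big_ind (fun x => x <= n)%N) => //.
    by move=> x y hx hy; rewrite geq_min hx.
  by move=> k _; rewrite -ltnS.
have nposn : forall a, (npos V a <= n)%N by move=> a; rewrite -ltnS card_le_n.
case: (posnP n) => [n0 | n0].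
  have P0 : P = 0%N by lia.
  have D0 : DD V = 0%N by lia.
  have C0 : codeg V = 0%N by lia.
  split.
  - rewrite D0; move: hdeg; rewrite hdegP P0; lia.
  - rewrite D0 C0 hdegP P0; lia.
  - by rewrite D0 C0.
  - by move=> a _ _; rewrite D0 C0; have := nposn a; lia.
have F1 : forall a, a != 0 -> (npos V a <= P)%N.
  move=> a a0.
  have H := @leq_bigmax_cond _ (fun k : 'I_n.+1 => `[< exists2 a, a != 0 & npos V a = k >])
     (fun k => nat_of_ord k) (Ordinal (card_le_n _ [set i | 0 < fval V a i])).
  by apply: H; apply/asboolP; exists a.
have F2 : P = 0%N \/ exists2 a, a != 0 & npos V a = P.
  rewrite /P; apply: (big_ind (fun x => x = 0%N \/ exists2 a, a != 0 & npos V a = x)).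
  - by left.
  - by move=> x y hx hy; rewrite /maxn; case: ltnP.
  - by move=> k /asboolP [a a0 ha]; right; exists a.
have F3 : forall a, a != 0 -> (codeg V <= nnonpos V a)%N.
  move=> a a0; rewrite /codeg.
  have H := @bigmin_le _ (fun k : 'I_n.+1 => `[< exists2 a, a != 0 & nnonpos V a = k >])
     (fun k => nat_of_ord k) n (Ordinal (card_le_n _ [set i | fval V a i <= 0])).
  by apply: H; apply/asboolP; exists a.
have F4 : (n - P <= codeg V)%N.
  rewrite /codeg; apply: (big_ind (fun x => n - P <= x)%N) => //.
  - exact: leq_subr.
  - by move=> x y hx hy; rewrite leq_min hx.
  - move=> k /asboolP [a a0 <-]; have := F1 a a0; have := hcomp a; lia.
have [g0 g00 hg0] := improve R _ _ V hrow n0 0.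
have F5 : forall a, (`|(npos V a)%:Z - (nneg V a)%:Z|%N <= 2 * P - n)%N.
  move=> a.
  have [g1 g10 h1] := improve R _ _ V hrow n0 a.
  have [g2 g20 h2] := improve R _ _ V hrow n0 (- a).
  have e1 : npos V (- a) = nneg V a.
    by apply: eq_card => i; rewrite !inE fvalN oppr_gt0.
  have e2 : nneg V (- a) = npos V a.
    by apply: eq_card => i; rewrite !inE fvalN oppr_lt0.
  move: h2; rewrite e1 e2 => h2.
  have := F1 _ g10; have := F1 _ g20; have := hcomp g1; have := hcomp g2.
  move: h1 h2; lia.
have F6 : (DD V <= 2 * P - n)%N.
  by apply/bigmax_leqP => k /asboolP [a <-]; apply: F5.
have F7 : (2 * P - n <= DD V)%N.
  case: F2 => [-> | [a a0 ha]]; first by rewrite muln0 sub0n.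
  have hle : (nneg V a <= nnonpos V a)%N.
    by apply: subset_leq_card; apply/subsetP => i; rewrite !inE => /ltW.
  have hD : (`|(npos V a)%:Z - (nneg V a)%:Z|%N <= DD V)%N.
    have hk : (`|(npos V a)%:Z - (nneg V a)%:Z|%N < n.+1)%N.
      have := nposn a; have : (nneg V a < n.+1)%N by apply: card_le_n. lia.
    apply: (@leq_bigmax_cond _ _ _ (Ordinal hk)).
    by apply/asboolP; exists a.
  have := hcomp a; move: hD hle; rewrite -ha; lia.
have FC : codeg V = (n - P)%N.
  apply/eqP; rewrite eqn_leq F4 andbT.
  case: F2 => [P0 | [a a0 ha]].
    by rewrite P0 subn0.
  by have := F3 a a0; have := hcomp a; lia.
have hn2 : (n <= 2 * P)%N.
  have z1 : npos V 0 = 0%N.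
    by apply/eqP; rewrite cards_eq0; apply/eqP/setP => i; rewrite !inE /fval mulmx0 mxE ltxx.
  have z2 : nneg V 0 = 0%N.
    by apply/eqP; rewrite cards_eq0; apply/eqP/setP => i; rewrite !inE /fval mulmx0 mxE ltxx.
  move: hg0; rewrite z1 z2; have := F1 _ g00; have := hcomp g0; lia.
split.
- move: hdeg hn; rewrite hdegP; lia.
- rewrite hdegP; lia.
- lia.
- move=> a a0 ha; have := hcomp a; lia.
Qed.
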